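(* For every integer $n\ge 10$ there exists a simple undirected graph $G$ on $n$ vertices whose interlace polynomial $q(G)$ has a non-unimodal coefficient sequence. In particular, there is a graph on 10 vertices with $q(G)=2x+7x^2+6x^3+7x^4+4x^5+3x^6+2x^7+x^8$.
   Context: All graphs are finite, simple and undirected. For a vertex $u$, $G\setminus u$ denotes $G$ with $u$ and all its incident edges removed. For a vertex $v$ with neighbourhood $N_v$, local complementation $G*v$ replaces the induced subgraph of $G$ on $N_v$ by its complement. For an edge $\{u,v\}$, edge local complementation is $G^{(uv)}=G*u*v*u$. The interlace polynomial $q(G)=q(G,x)$ is defined recursively: for the edgeless graph $E_n$ on $n$ vertices, $q(E_n)=x^n$; for any other graph $G$, choose any edge $\{u,v\}$ and set $q(G)=q(G\setminus u)+q(G^{(uv)}\setminus u)$ (independent of the choice of edge). The coefficient sequence $(a_1,\dots,a_d)$ of $q(G)=\sum_{i=1}^d a_ix^i$ is unimodal if there is $k$ with $a_1\le\cdots\le a_k$ and $a_k\ge\cdots\ge a_d$. *)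

(* Defs.v *)
From HB Require Import structures.
From mathcomp Require Import all_boot all_order all_algebra.
Set Implicit Arguments. Unset Strict Implicit. Unset Printing Implicit Defensive.
Import GRing.Theory.
Local Open Scope ring_scope.

(* A finite simple graph with vertices labelled by natural numbers:
   [gverts] is the (duplicate-free) vertex list, [gadj] a relation whose
   restriction to distinct vertices of [gverts] gives the edges. *)
Record lgraph := LGraph { gverts : seq nat; gadj : nat -> nat -> bool }.

Definition adjacent (G : lgraph) (x y : nat) : bool :=
  [&& x \in gverts G, y \in gverts G, x != y & gadj G x y || gadj G y x].

Definition gdel (u : nat) (G : lgraph) : lgraph :=
  LGraph [seq w <- gverts G | w != u] (gadj G).

Definition lcomp (v : nat) (G : lgraph) : lgraph :=
  LGraph (gverts G)
    (fun x y => adjacent G x y (+) [&& x != y, adjacent G v x & adjacent G v y]).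

Definition elcomp (u v : nat) (G : lgraph) : lgraph :=
  lcomp u (lcomp v (lcomp u G)).

Definition pick_edge (G : lgraph) : option (nat * nat) :=
  ohead [seq p <- [seq (u, v) | u <- gverts G, v <- gverts G]
         | adjacent G p.1 p.2].

(* The interlace recursion q(G) = q(G\u) + q(G^(uv)\u), q(E_n) = x^n,
   with fuel = number of vertices (each step deletes one vertex). *)
Fixpoint interlace_fuel (fuel : nat) (G : lgraph) : {poly int} :=
  match fuel with
  | 0%N => 'X^(size (gverts G))
  | f.+1 =>
      match pick_edge G with
      | None => 'X^(size (gverts G))
      | Some (u, v) =>
          interlace_fuel f (gdel u G) + interlace_fuel f (gdel u (elcomp u v G))
      end
  end.

Definition interlace (G : lgraph) : {poly int} :=
  let G' := LGraph (undup (gverts G)) (gadj G) in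
  interlace_fuel (size (gverts G')) G'.

Definition graph_of (n : nat) (e : rel 'I_n) : lgraph :=
  LGraph (iota 0 n)
    (fun a b => [exists i : 'I_n, exists j : 'I_n,
                   [&& nat_of_ord i == a, nat_of_ord j == b & e i j]]).

Definition simple_graph (n : nat) (e : rel 'I_n) : Prop :=
  symmetric e /\ irreflexive e.

Definition interlace_poly (n : nat) (e : rel 'I_n) : {poly int} :=
  interlace (graph_of e).

Definition unimodal (p : {poly int}) : Prop :=
  exists k : nat,
    (forall i j : nat, (1 <= i)%N -> (i <= j)%N -> (j <= k)%N -> p`_i <= p`_j) /\
    (forall i j : nat, (k <= i)%N -> (i <= j)%N -> (j <= (size p).-1)%N -> p`_j <= p`_i).

(* Main.v *)
From Stdlib Require Import FunctionalExtensionality.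
Require Import Defs.
From HB Require Import structures.
From mathcomp Require Import all_boot all_order all_algebra.
Import GRing.Theory.
Local Open Scope ring_scope.

Definition normalize (G : lgraph) : lgraph :=
  LGraph (gverts G) (let ed := [seq p <- [seq (x, y) | x <- gverts G, y <- gverts G] | adjacent G p.1 p.2] in
     fun x y => (x, y) \in ed).
Definition celcomp (u v : nat) (G : lgraph) : lgraph :=
  normalize (lcomp u (normalize (lcomp v (normalize (lcomp u G))))).
Fixpoint cleaves (f : nat) (G : lgraph) : seq nat :=
  match f with
  | 0%N => [:: size (gverts G)]
  | f.+1 => match pick_edge G with
     | None => [:: size (gverts G)]
     | Some (u, v) => cleaves f (gdel u G) ++ cleaves f (gdel u (celcomp u v G))
     end end.

Lemma adj_sym G x y : adjacent G x y = adjacent G y x.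
Proof. by rewrite /adjacent eq_sym orbC; case: (x \in _); case: (y \in _). Qed.

Lemma adj_mem G x y : adjacent G x y -> (x \in gverts G) && (y \in gverts G).
Proof. by case/and4P=> -> ->. Qed.

Lemma adj_norm G : adjacent (normalize G) = adjacent G.
Proof.
apply: functional_extensionality => x; apply: functional_extensionality => y.
case Hx: (x \in gverts G); last first.
  by rewrite /adjacent /= Hx; case: (boolP (adjacent G x y)) => // /adj_mem; rewrite Hx.
case Hy: (y \in gverts G); last first.
  by rewrite /adjacent /= Hx Hy; case: (boolP (adjacent G x y)) => // /adj_mem; rewrite Hy andbF.
have Hm : forall a b, a \in gverts G -> b \in gverts G ->
  ((a, b) \in [seq p <- [seq (x, y) | x <- gverts G, y <- gverts G] | adjacent G p.1 p.2]) = adjacent G a b.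
  by move=> a b Ha Hb; rewrite mem_filter /= (allpairs_f (fun x y => (x, y)) Ha Hb) andbT.
rewrite /adjacent /= Hx Hy /= !Hm // -/(adjacent G x y) -/(adjacent G y x) (adj_sym G y x) orbb.
by rewrite /adjacent Hx Hy; case: (x != y).
Qed.
Lemma lcomp_congr v G H : adjacent G = adjacent H -> gverts G = gverts H -> lcomp v G = lcomp v H.
Proof. by rewrite /lcomp => -> ->. Qed.

Lemma lcomp_norm v G : lcomp v (normalize G) = lcomp v G.
Proof. exact: (@lcomp_congr v _ _ (adj_norm G) erefl). Qed.

Lemma adj_gdel u G x y : adjacent (gdel u G) x y = [&& x != u, y != u & adjacent G x y].
Proof.
rewrite /adjacent /= !mem_filter.
by case: (x != u); case: (y != u); rewrite /= ?andbF.
Qed.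

Lemma pick_congr G H : adjacent G = adjacent H -> gverts G = gverts H -> pick_edge G = pick_edge H.
Proof. by rewrite /pick_edge => -> ->. Qed.

Lemma fuel_congr f G H : adjacent G = adjacent H -> gverts G = gverts H ->
  interlace_fuel f G = interlace_fuel f H.
Proof.
elim: f G H => [|f IH] G H HA HV /=; first by rewrite HV.
rewrite (pick_congr _ _ HA HV) HV; case: pick_edge => [[u v]|] //.
congr (_ + _).
  apply: IH => //=; last by rewrite HV.
  by apply: functional_extensionality => x; apply: functional_extensionality => y; rewrite !adj_gdel HA.
by rewrite /elcomp (@lcomp_congr u G H HA HV).
Qed.

Lemma adj_celcomp u v G : adjacent (celcomp u v G) = adjacent (elcomp u v G).
Proof. by rewrite /celcomp adj_norm !lcomp_norm. Qed.

Lemma leaves f G : interlace_fuel f G = \sum_(k <- cleaves f G) 'X^k.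
Proof.
elim: f G => [|f IH] G /=; first by rewrite big_seq1.
case: pick_edge => [[u v]|]; last by rewrite big_seq1.
rewrite big_cat -!IH; congr (_ + _).
apply: fuel_congr => //.
by apply: functional_extensionality => x; apply: functional_extensionality => y; rewrite !adj_gdel adj_celcomp.
Qed.
Lemma fl_right (P : pred (nat * nat)) (B : pred nat) x l :
  (forall a b, P (a, b) -> B b) ->
  [seq p <- [seq (x, y) | y <- l] | P p] = [seq p <- [seq (x, y) | y <- filter B l] | P p].
Proof.
move=> HB; elim: l => [|y l IH] //=.
case By: (B y) => /=; first by rewrite IH.
by case Pxy: (P (x, y)) => //; move: (HB _ _ Pxy); rewrite By.
Qed.

Lemma fl_both (P : pred (nat * nat)) (A : pred nat) l1 l2 :
  (forall a b, P (a, b) -> A a && A b) ->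
  [seq p <- [seq (x, y) | x <- l1, y <- l2] | P p] =
  [seq p <- [seq (x, y) | x <- filter A l1, y <- filter A l2] | P p].
Proof.
move=> HA; elim: l1 => [|x l1 IH] //=.
idtac.
case Ax: (A x) => /=; rewrite !filter_cat IH.
  by rewrite (@fl_right P A) // => a b /HA /andP[].
rewrite (_ : [seq p <- [seq (x, y) | y <- l2] | P p] = [::]) //.
clear IH; elim: l2 => [|y l2 IH2] //=.
by case Pxy: (P (x, y)) => //; move: (HA _ _ Pxy); rewrite Ax.
Qed.

Section Iso.
Variable t : seq nat.

Definition Qiso (a : nat -> nat -> bool) := forall x y, x \in t -> a x y = false /\ a y x = false.
Definition Diso (s : seq nat) := forall x, x \in t -> x \notin s.

Lemma adj_ext s a : Qiso a -> Diso s -> adjacent (LGraph (s ++ t) a) = adjacent (LGraph s a).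
Proof.
move=> HQ HD; apply: functional_extensionality => x; apply: functional_extensionality => y.
rewrite /adjacent /= !mem_cat.
case: (boolP (x \in t)) => xt.
  by rewrite (negbTE (HD _ xt)) /=; case: (HQ x y xt) => -> ->; rewrite !andbF.
case: (boolP (y \in t)) => yt.
  by rewrite (negbTE (HD _ yt)) /=; case: (HQ y x yt) => -> ->; rewrite !andbF.
by rewrite !orbF.
Qed.

Lemma pick_ext s a : Qiso a -> Diso s -> pick_edge (LGraph (s ++ t) a) = pick_edge (LGraph s a).
Proof.
move=> HQ HD; rewrite /pick_edge (adj_ext _ _ HQ HD) /=.
rewrite (@fl_both _ (fun w => w \in s)); last by move=> p q /adj_mem.
rewrite filter_cat (_ : [seq w <- t | w \in s] = [::]) ?cats0.
  rewrite (_ : [seq w <- s | w \in s] = s) //; exact/all_filterP/allP.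
by rewrite (@eq_in_filter _ _ pred0) ?filter_pred0 // => w /HD /negbTE ->.
Qed.
Lemma pick_adj G u v : pick_edge G = Some (u, v) -> adjacent G u v.
Proof.
rewrite /pick_edge.
set l := [seq p <- _ | _].
have Hm : forall p, p \in l -> adjacent G p.1 p.2 by move=> p; rewrite mem_filter => /andP[].
case: l Hm => //= p l Hm [Ep]; by move: (Hm p); rewrite inE eqxx Ep => /(_ isT).
Qed.

Lemma lcomp_iso w s a : Qiso a -> Diso s ->
  lcomp w (LGraph (s ++ t) a) = LGraph (s ++ t) (gadj (lcomp w (LGraph s a)))
  /\ Qiso (gadj (lcomp w (LGraph s a))).
Proof.
move=> HQ HD; split; first by rewrite /lcomp /= (adj_ext _ _ HQ HD).
move=> x y xt /=.
have nx : forall z, adjacent (LGraph s a) x z = false.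
  by move=> z; apply/negbTE/negP => /adj_mem /andP[/= xs _]; move: (HD _ xt); rewrite xs.
have nx' : forall z, adjacent (LGraph s a) z x = false by move=> z; rewrite adj_sym nx.
by rewrite !nx !nx' /= !andbF.
Qed.

Lemma size_del (u : nat) (s : seq nat) : u \in s -> (size [seq w <- s | w != u] < size s)%N.
Proof.
move=> us; rewrite size_filter -(count_predC (fun w => w != u) s).
rewrite -{1}[count _ s]addn0 ltn_add2l -has_count; apply/hasP; exists u => //=.
by rewrite negbK.
Qed.

Lemma iso f s a : Qiso a -> Diso s ->
  interlace_fuel f (LGraph (s ++ t) a) = interlace_fuel f (LGraph s a) * 'X^(size t).
Proof.
elim: f s a => [|f IH] s a HQ HD; first by rewrite /= size_cat exprD.
rewrite /interlace_fuel -/interlace_fuel (pick_ext _ _ HQ HD).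
case Hp: pick_edge => [[u v]|]; last by rewrite /= size_cat exprD.
have us : u \in s.
  by case/andP: (adj_mem _ _ _ (pick_adj _ _ _ Hp)).
have ut : u \notin t by apply/negP => /HD; rewrite us.
have Hdel : forall b, gdel u (LGraph (s ++ t) b) = LGraph ([seq w <- s | w != u] ++ t) b.
  move=> b; rewrite /gdel /= filter_cat; congr (LGraph (_ ++ _) _).
  by apply/all_filterP/allP => w wt; apply: contraNneq ut => <-.
have HD' : Diso [seq w <- s | w != u].
  by move=> w /HD ws; rewrite mem_filter negb_and ws orbT.
rewrite mulrDl; congr (_ + _).
  by rewrite Hdel IH.
rewrite /elcomp.
case: (lcomp_iso u _ _ HQ HD) => -> Q1.
case: (lcomp_iso v _ _ Q1 HD) => -> Q2.
case: (lcomp_iso u _ _ Q2 HD) => -> Q3.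
by rewrite Hdel IH.
Qed.

End Iso.

Lemma fuel_mono f f' G : (size (gverts G) <= f)%N -> (f <= f')%N ->
  interlace_fuel f G = interlace_fuel f' G.
Proof.
elim: f f' G => [|f IH] [|f'] G //= Hs Hf.
  move: Hs; rewrite leqn0 size_eq0 => /eqP Hn.
  by rewrite /pick_edge Hn.
case Hp: pick_edge => [[u v]|] //.
have us : u \in gverts G.
  by case/andP: (adj_mem _ _ _ (pick_adj _ _ _ Hp)).
have Hs' : (size [seq w <- gverts G | w != u] <= f)%N.
  by rewrite -ltnS; apply: leq_trans (size_del _ _ us) Hs.
by rewrite !(IH f') //.
Qed.
Definition EL : seq (nat * nat) :=
  [:: (0,6);(0,7);(1,7);(2,7);(3,6);(3,7);(4,7);(5,6);(5,7);(6,8);(6,9);(7,9)]%N.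
Definition E (a b : nat) : bool := ((a, b) \in EL) || ((b, a) \in EL).
Definition G0 := LGraph (iota 0 10) E.

Lemma Eirr x : E x x = false.
Proof.
rewrite /E orbb !inE !xpair_eqE.
by case: x => [|[|[|[|[|[|[|[|[|[|x]]]]]]]]]].
Qed.

Lemma Eout x y : (10 <= x)%N -> E x y = false /\ E y x = false.
Proof.
case: x => [|[|[|[|[|[|[|[|[|[|x]]]]]]]]]] // _.
by rewrite /E !inE !xpair_eqE /= !andbF.
Qed.

Definition target : {poly int} :=
       2%:R *: 'X + 7%:R *: 'X^2 + 6%:R *: 'X^3 + 7%:R *: 'X^4
       + 4%:R *: 'X^5 + 3%:R *: 'X^6 + 2%:R *: 'X^7 + 'X^8.

Lemma sum_nseq (n a : nat) : \sum_(i <- nseq n a) ('X^i : {poly int}) = 'X^a *+ n.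
Proof. by elim: n => [|n IH]; rewrite ?big_nil // big_cons IH mulrS. Qed.

Lemma q0 : interlace_fuel 10 G0 = target.
Proof.
rewrite leaves.
have Hp : perm_eq (cleaves 10 G0)
  (nseq 2 1 ++ nseq 7 2 ++ nseq 6 3 ++ nseq 7 4 ++ nseq 4 5 ++ nseq 3 6 ++ nseq 2 7 ++ nseq 1 8)%N.
  by vm_compute.
rewrite (perm_big _ Hp) !big_cat !sum_nseq /target !scaler_nat expr1.
by rewrite /= mulr1n !addrA.
Qed.

Definition eN n : rel 'I_n := fun i j => E i j.

Lemma eN_simple n : simple_graph (eN n).
Proof. by split; [move=> i j; rewrite /eN /E orbC | move=> i; exact: Eirr]. Qed.

Lemma gadjN n x y : gadj (graph_of (eN n)) x y = [&& (x < n)%N, (y < n)%N & E x y].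
Proof.
apply/idP/idP => /=.
  by case/existsP=> i /existsP [j /and3P [/eqP <- /eqP <- Eij]]; rewrite !ltn_ord.
case/and3P=> xn yn Exy; apply/existsP; exists (Ordinal xn); apply/existsP; exists (Ordinal yn).
by rewrite /= !eqxx.
Qed.

Lemma interN n : interlace_poly (eN n) = interlace_fuel n (LGraph (iota 0 n) (gadj (graph_of (eN n)))).
Proof. by rewrite /interlace_poly /interlace /= undup_id ?iota_uniq // size_iota. Qed.

Lemma qN n : (10 <= n)%N -> interlace_poly (eN n) = target * 'X^(n - 10).
Proof.
move=> hn; rewrite interN.
have -> : iota 0 n = iota 0 10 ++ iota 10 (n - 10) by rewrite -iotaD subnKC.
rewrite iso; last first.
- move=> x; rewrite !mem_iota => /andP[x10 _]; by rewrite negb_and ltnNge x10 orbT.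
- move=> x y; rewrite mem_iota => /andP[x10 _]; rewrite !gadjN.
  by case: (Eout _ y x10) => -> ->; rewrite !andbF.
rewrite size_iota -(fuel_mono 10 n) //.
rewrite (fuel_congr _ _ G0) ?q0 //.
apply: functional_extensionality => x; apply: functional_extensionality => y.
rewrite /adjacent !gadjN !(mem_iota 0 10) /= !add0n.
case: (boolP (x < 10)%N) => hx; last by [].
case: (boolP (y < 10)%N) => hy; last by [].
by rewrite (leq_trans hx hn) (leq_trans hy hn).
Qed.

Lemma tc : [/\ target`_2 = 7%:R, target`_3 = 6%:R, target`_4 = 7%:R & target`_8 = 1].
Proof. by rewrite /target !coefD !coefZ !coefX !coefXn. Qed.

Theorem mainTheorem3 :
  (forall n : nat, (10 <= n)%N ->
     exists e : rel 'I_n, simple_graph e /\ ~ unimodal (interlace_poly e)) /\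
  (exists e : rel 'I_10, simple_graph e /\
     interlace_poly e =
       2%:R *: 'X + 7%:R *: 'X^2 + 6%:R *: 'X^3 + 7%:R *: 'X^4
       + 4%:R *: 'X^5 + 3%:R *: 'X^6 + 2%:R *: 'X^7 + 'X^8).
Proof.
split; last first.
  exists (eN 10); split; first exact: eN_simple.
  by rewrite qN // subnn expr0 mulr1.
move=> n hn; exists (eN n); split; first exact: eN_simple.
rewrite qN // => -[k [H1 H2]].
set m := (n - 10)%N.
case: tc => c2 c3 c4 c8.
have c i : (target * 'X^m)`_(m + i) = target`_i.
  by rewrite coefMXn ltnNge leq_addr /= addKn.
have hs8 : (m + 8 < size (target * 'X^m)%R)%N.
  rewrite ltnNge; apply/negP => /(@nth_default int 0%R (target * 'X^m)%R (m + 8)%N).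
  by rewrite c c8 => /eqP; rewrite oner_eq0.
have hs4 : (m + 4 <= (size (target * 'X^m)%R).-1)%N.
  by rewrite -ltnS (ltn_predK hs8); apply: leq_trans hs8; rewrite ltnS leq_add2l.
case: (leqP k (m + 3)) => hk.
  have := H2 (m + 3)%N (m + 4)%N hk _ hs4; rewrite !c c3 c4 Num.Theory.ler_nat leq_add2l => /(_ isT).
  by [].
have := H1 (m + 2)%N (m + 3)%N _ _ (ltnW hk); rewrite !c c2 c3 Num.Theory.ler_nat.
by rewrite addn2 addn3 => /(_ isT (leqnSn _)).
Qed.
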